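(* Let $S_1,S_2\subseteq\mathbb N$ be numerical semigroups, $S=S_1\times S_2\subseteq\mathbb N^2$, and $\boldsymbol\omega=(w_1,w_2)\in S$ with $w_1,w_2>0$. Write $\mathrm{Ap}(S_1,w_1)=\{u_1<u_2<\dots<u_{w_1}\}$ and $\mathrm{Ap}(S_2,w_2)=\{v_1<\dots<v_{w_2}\}$, and set formally $u_{w_1+1}=v_{w_2+1}=\infty$. Then the levels of $\mathrm{Ap}(S,\boldsymbol\omega)=S\setminus(\boldsymbol\omega+S)$ are $A_1,\dots,A_{w_1+w_2}$, where $A_1=\{(0,0)\}$ and, for $2\le k\le w_1+w_2$, $$A_k=\bigcup_{\substack{1\le i\le w_1,\ 1\le j\le w_2\\ i+j=k}}\Big(\{(u_i,b): b\in S_2,\ v_j<b\le v_{j+1}\}\cup\{(a,v_j): a\in S_1,\ u_i<a\le u_{i+1}\}\Big).$$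
   Context: For a numerical semigroup $T$ and $w\in T$, $\mathrm{Ap}(T,w)=T\setminus(w+T)$, a set with $w$ elements. $S=S_1\times S_2$ is a (non-local) good semigroup and $\boldsymbol\omega+S$ is a good ideal of it. Notation: $\le$ componentwise on $\mathbb Z^2$, $\boldsymbol\alpha\ll\boldsymbol\beta$ means both coordinates strictly smaller, $\boldsymbol\alpha\le\le\boldsymbol\beta$ means $\boldsymbol\alpha=\boldsymbol\beta$ or $\boldsymbol\alpha\ll\boldsymbol\beta$, $\wedge$ componentwise minimum, $\Delta^S_i(\boldsymbol\alpha)=\{\boldsymbol\beta\in S:\beta_i=\alpha_i,\ \beta_j>\alpha_j\ (j\neq i)\}$. Levels of $A=\mathrm{Ap}(S,\boldsymbol\omega)$: $\boldsymbol\alpha\in B$ is a complete infimum of $\boldsymbol\beta^{(1)},\boldsymbol\beta^{(2)}\in B$ if, up to order, $\boldsymbol\beta^{(1)}\in\Delta^S_1(\boldsymbol\alpha)$ and $\boldsymbol\beta^{(2)}\in\Delta^S_2(\boldsymbol\alpha)$. $B^{(1)}$ = maximal elements of $A$ for $\le\le$, $C^{(1)}$ = those that are complete infima of two elements of $B^{(1)}$, $D^{(1)}=B^{(1)}\setminus C^{(1)}$; inductively $B^{(i)}$ = maximal elements for $\le\le$ of $A\setminus\bigcup_{j<i}D^{(j)}$, $C^{(i)},D^{(i)}$ likewise; $A=\bigsqcup_{i=1}^ND^{(i)}$ and the levels are $A_i=D^{(N+1-i)}$. *)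

(* Defs.v *)
From Stdlib Require Import Arith.

Definition set1 := nat -> Prop.
Definition set2 := (nat * nat)%type -> Prop.

Definition numerical_semigroup (T : set1) : Prop :=
  T 0 /\ (forall a b, T a -> T b -> T (a + b)) /\
  (exists c, forall n, c <= n -> T n).

Definition apery1 (T : set1) (w : nat) : set1 :=
  fun x => T x /\ ~ (exists t, T t /\ x = w + t).

Definition prodS (S1 S2 : set1) : set2 := fun x => S1 (fst x) /\ S2 (snd x).

Definition apery2 (S : set2) (om : nat * nat) : set2 :=
  fun x => S x /\
    ~ (exists s, S s /\ fst x = fst om + fst s /\ snd x = snd om + snd s).

Definition lele (a b : nat * nat) : Prop :=
  a = b \/ (fst a < fst b /\ snd a < snd b).

Definition maxll (X : set2) : set2 :=
  fun a => X a /\ forall b, X b -> lele a b -> b = a.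

Definition Delta1 (S : set2) (a : nat * nat) : set2 :=
  fun b => S b /\ fst b = fst a /\ snd b > snd a.
Definition Delta2 (S : set2) (a : nat * nat) : set2 :=
  fun b => S b /\ snd b = snd a /\ fst b > fst a.

(* alpha in B is a complete infimum of two elements of B
   (up to order: one in Delta_1, the other in Delta_2) *)
Definition complete_inf (S B : set2) (a : nat * nat) : Prop :=
  B a /\ exists b1 b2, B b1 /\ B b2 /\ Delta1 S a b1 /\ Delta2 S a b2.

(* one step of the construction applied to the remaining set X:
   B = maximal elements, C = complete infima in B, D = B \ C *)
Definition Bstep (X : set2) : set2 := maxll X.
Definition Dstep (S X : set2) : set2 :=
  fun a => Bstep X a /\ ~ complete_inf S (Bstep X) a.

Fixpoint Rem (SS A : set2) (n : nat) : set2 :=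
  match n with
  | 0 => A
  | Datatypes.S n' => fun a => Rem SS A n' a /\ ~ Dstep SS (Rem SS A n') a
  end.

(* D^(i) for i >= 1 (paper's indexing) *)
Definition Dlev (S A : set2) (i : nat) : set2 := Dstep S (Rem S A (i - 1)).

(* "the levels of A are L 1, ..., L N":
   D^(1),...,D^(N) are nonempty, A is their (disjoint by construction) union,
   and A_k = D^(N+1-k) equals L k for 1 <= k <= N. *)
Definition are_levels (S A : set2) (N : nat) (L : nat -> set2) : Prop :=
  (forall i, 1 <= i <= N -> exists a, Dlev S A i a) /\
  (forall a, A a <-> exists i, 1 <= i <= N /\ Dlev S A i a) /\
  (forall k, 1 <= k <= N -> forall a, Dlev S A (N + 1 - k) a <-> L k a).

(* bound "x <= u_{i+1}", with the convention u_{w+1} = infinity *)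
Definition le_next (u : nat -> nat) (w i x : nat) : Prop :=
  i < w -> x <= u (Datatypes.S i).

Definition Aform (S1 S2 : set1) (w1 w2 : nat) (u v : nat -> nat)
    (k : nat) : set2 :=
  fun x =>
    if k =? 1 then x = (0, 0) else
    exists i j, 1 <= i <= w1 /\ 1 <= j <= w2 /\ i + j = k /\
      ((fst x = u i /\ S2 (snd x) /\ v j < snd x /\ le_next v w2 j (snd x)) \/
       (snd x = v j /\ S1 (fst x) /\ u i < fst x /\ le_next u w1 i (fst x))).

(* Main.v *)
Require Import Defs.
From Stdlib Require Import Arith Lia Classical FunctionalExtensionality PropExtensionality.

Definition G (T : set1) (w : nat) (u : nat -> nat) : Prop :=
  numerical_semigroup T /\ T w /\ 0 < w /\
  (forall i j, 1 <= i -> i < j -> j <= w -> u i < u j) /\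
  (forall x, apery1 T w x <-> exists i, 1 <= i <= w /\ x = u i).

Fixpoint cnt (u : nat -> nat) (n a : nat) : nat :=
  match n with
  | 0 => 0
  | Datatypes.S n' => cnt u n' a + (if u (Datatypes.S n') <? a then 1 else 0)
  end.

Lemma cnt_le u n a : cnt u n a <= n.
Proof. induction n; simpl; [lia|]. destruct (_ <? _); lia. Qed.

Lemma cnt_mono u n a a' : a <= a' -> cnt u n a <= cnt u n a'.
Proof.
  intro H; induction n; simpl; [lia|].
  destruct (Nat.ltb_spec (u (S n)) a); destruct (Nat.ltb_spec (u (S n)) a'); lia.
Qed.

Lemma cnt_strict u n k a a' : 1 <= k <= n -> a <= u k -> u k < a' ->
  cnt u n a < cnt u n a'.
Proof.
  intros Hk H1 H2. induction n; [lia|]. simpl.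
  destruct (Nat.eq_dec k (S n)).
  - subst. pose proof (cnt_mono u n a a' ltac:(lia)).
    destruct (Nat.ltb_spec (u (S n)) a); destruct (Nat.ltb_spec (u (S n)) a'); lia.
  - assert (cnt u n a < cnt u n a') by (apply IHn; lia).
    destruct (Nat.ltb_spec (u (S n)) a); destruct (Nat.ltb_spec (u (S n)) a'); lia.
Qed.

Lemma cnt_zero0 u n : cnt u n 0 = 0.
Proof. induction n; simpl; [lia|]. destruct (Nat.ltb_spec (u (S n)) 0); lia. Qed.


Lemma G_incr T w u : G T w u -> forall i j, 1 <= i -> i < j -> j <= w -> u i < u j.
Proof. intros (_&_&_&H&_); exact H. Qed.
Lemma G_ap T w u : G T w u -> forall x, apery1 T w x <-> exists i, 1 <= i <= w /\ x = u i.
Proof. intros (_&_&_&_&H); exact H. Qed.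

Lemma u_le T w u (H : G T w u) p q : 1 <= p -> p <= q -> q <= w -> u p <= u q.
Proof.
  intros. destruct (Nat.eq_dec p q); [subst; lia|].
  pose proof (G_incr _ _ _ H p q); lia.
Qed.

Lemma cnt_exact T w u (H : G T w u) i a : i <= w -> (1 <= i -> u i < a) ->
  (i < w -> a <= u (S i)) -> cnt u w a = i.
Proof.
  intros Hi H1 H2.
  assert (forall n, n <= w -> cnt u n a = Nat.min n i) as Hn.
  { induction n; intros; cbn [cnt]; [lia|]. rewrite IHn by lia.
    destruct (Nat.ltb_spec (u (S n)) a).
    - destruct (le_lt_dec (S n) i); [lia|].
      assert (u (S i) <= u (S n)) by (apply (u_le T w u H); lia).
      specialize (H2 ltac:(lia)). lia.
    - destruct (le_lt_dec (S n) i); [|lia].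
      assert (u (S n) <= u i) by (apply (u_le T w u H); lia).
      specialize (H1 ltac:(lia)). lia. }
  rewrite Hn by lia. lia.
Qed.

Lemma ap_in T w u (H : G T w u) i : 1 <= i <= w -> T (u i) /\ apery1 T w (u i).
Proof.
  intros Hi. assert (apery1 T w (u i)) as Ha by (apply (G_ap _ _ _ H); eauto).
  split; [destruct Ha; auto | auto].
Qed.

Lemma ap0 T w u (H : G T w u) : apery1 T w 0.
Proof.
  destruct H as ((h0&_&_)&_&hw&_). split; auto. intros [t [_ Ht]]. lia.
Qed.

Lemma u1 T w u (H : G T w u) : u 1 = 0.
Proof.
  destruct (proj1 (G_ap _ _ _ H 0) (ap0 _ _ _ H)) as [i [Hi E]].
  assert (u 1 <= u i) by (apply (u_le T w u H); lia). lia.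
Qed.

Lemma cnt_u T w u (H : G T w u) i : 1 <= i <= w -> cnt u w (u i) = i - 1.
Proof.
  intros. apply (cnt_exact T w u H); try lia.
  - intros. apply (G_incr _ _ _ H); lia.
  - intros. replace (S (i - 1)) with i by lia. lia.
Qed.

Lemma cnt_char T w u (H : G T w u) i a : 1 <= i <= w ->
  (cnt u w a = i <-> u i < a /\ le_next u w i a).
Proof.
  intros Hi. split.
  - intros E. split.
    + destruct (le_lt_dec a (u i)); auto.
      pose proof (cnt_mono u w a (u i) l). rewrite (cnt_u T w u H i Hi) in H0. lia.
    + intro Hl. destruct (le_lt_dec a (u (S i))); auto.
      pose proof (cnt_strict u w (S i) (u (S i)) a ltac:(lia) ltac:(lia) l).
      rewrite (cnt_u T w u H (S i)) in H0 by lia. lia.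
  - intros [H1 H2]. apply (cnt_exact T w u H); auto; lia.
Qed.

Lemma cnt0 T w u (H : G T w u) a : cnt u w a = 0 -> a = 0.
Proof.
  intros E. destruct (Nat.eq_dec a 0); auto.
  pose proof (u1 T w u H). destruct H as (_&_&hw&_).
  pose proof (cnt_strict u w 1 0 a ltac:(lia) ltac:(lia) ltac:(lia)). lia.
Qed.

Lemma ap_S T w a : apery1 T w a -> T a.
Proof. intros [h _]; exact h. Qed.

Lemma ap_cnt_lt T w u (H : G T w u) a : apery1 T w a -> cnt u w a < w.
Proof.
  intros Ha. destruct (proj1 (G_ap _ _ _ H a) Ha) as [i [Hi E]]. subst.
  rewrite (cnt_u T w u H i Hi). lia.
Qed.

Lemma ap_strict T w u (H : G T w u) a a' : apery1 T w a -> a < a' ->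
  cnt u w a < cnt u w a'.
Proof.
  intros Ha Hl. destruct (proj1 (G_ap _ _ _ H a) Ha) as [i [Hi E]]. subst.
  apply (cnt_strict u w i); lia.
Qed.

Lemma witness T w u (H : G T w u) t : 1 <= t <= w ->
  exists e, T e /\ cnt u w e = t /\ u t < e.
Proof.
  intros Ht. destruct (Nat.eq_dec t w).
  - subst. exists (u w + w). pose proof H as ((_&hc&_)&hw&hp&_).
    split; [apply hc; auto; apply (ap_in T w u H w); lia|].
    split; [|lia]. apply (cnt_exact T w u H); lia.
  - exists (u (S t)). split; [apply (ap_in T w u H); lia|].
    split. rewrite (cnt_u T w u H) by lia. lia.
    apply (G_incr _ _ _ H); lia.
Qed.

Lemma witness2 T w u (H : G T w u) j t : 1 <= j -> j <= t -> t <= w ->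
  exists e, T e /\ cnt u w e = t /\ u j < e.
Proof.
  intros. destruct (witness T w u H t) as [e (?&?&?)]; [lia|].
  exists e; repeat split; auto. assert (u j <= u t) by (apply (u_le T w u H); lia). lia.
Qed.

Lemma nonap_pos T w u (H : G T w u) b : ~ apery1 T w b -> 1 <= cnt u w b.
Proof.
  intros Hb. destruct (Nat.eq_dec (cnt u w b) 0); [|lia].
  apply (cnt0 T w u H) in e. subst. exfalso. apply Hb, (ap0 T w u H).
Qed.

Lemma nonap_lt_next T w u (H : G T w u) b : ~ apery1 T w b -> cnt u w b < w ->
  b < u (S (cnt u w b)).
Proof.
  intros Hb Hl. pose proof (nonap_pos T w u H b Hb).
  destruct (proj1 (cnt_char T w u H (cnt u w b) b ltac:(lia)) eq_refl) as [_ H2].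
  specialize (H2 Hl). destruct (Nat.eq_dec b (u (S (cnt u w b)))); [|lia].
  exfalso. apply Hb. rewrite e. apply (ap_in T w u H). lia.
Qed.

Lemma nonap_next T w u (H : G T w u) b : T b -> ~ apery1 T w b ->
  exists b', T b' /\ b < b' /\ cnt u w b' = cnt u w b.
Proof.
  intros Tb Hb. pose proof (cnt_le u w b).
  destruct (Nat.eq_dec (cnt u w b) w).
  - exists (b + w). pose proof H as ((_&hc&_)&hw&hp&_).
    split; [apply hc; auto|]. split; [lia|].
    pose proof (cnt_mono u w b (b + w) ltac:(lia)). pose proof (cnt_le u w (b+w)). lia.
  - exists (u (S (cnt u w b))). split; [apply (ap_in T w u H); lia|].
    split; [apply (nonap_lt_next T w u H); auto; lia|].
    rewrite (cnt_u T w u H) by lia. lia.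
Qed.

Definition lam (u : nat -> nat) w1 (v : nat -> nat) w2 (x : nat * nat) :=
  cnt u w1 (fst x) + cnt v w2 (snd x) + 1.

Lemma A_char S1 S2 w1 w2 x :
  apery2 (prodS S1 S2) (w1, w2) x <->
  S1 (fst x) /\ S2 (snd x) /\ (apery1 S1 w1 (fst x) \/ apery1 S2 w2 (snd x)).
Proof.
  destruct x as [a b]; unfold apery2, prodS; simpl. split.
  - intros [[Ha Hb] Hn]. repeat split; auto.
    destruct (classic (apery1 S1 w1 a)) as [|Hna]; [left; auto|right].
    split; auto. intros [t [Ht Hbt]]. apply Hn.
    assert (exists t, S1 t /\ a = w1 + t) as [t0 [Ht0 E0]].
    { apply NNPP; intro HH; apply Hna; split; auto. }
    exists (t0, t); simpl; repeat split; auto.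
  - intros [Ha [Hb Hor]]. split; [split; auto|].
    intros [[s1 s2] [[Hs1 Hs2] [E1 E2]]]. simpl in *.
    destruct Hor as [[_ Hn]|[_ Hn]]; apply Hn; eauto.
Qed.


Lemma lam_strict S1 S2 w1 w2 u v (G1 : G S1 w1 u) (G2 : G S2 w2 v) x y :
  apery2 (prodS S1 S2) (w1, w2) x -> fst x < fst y -> snd x < snd y ->
  lam u w1 v w2 x < lam u w1 v w2 y.
Proof.
  intros Ax H1 H2. apply A_char in Ax. destruct Ax as (_&_&[Ha|Hb]); unfold lam.
  - pose proof (ap_strict _ _ _ G1 _ _ Ha H1).
    pose proof (cnt_mono v w2 (snd x) (snd y) ltac:(lia)). lia.
  - pose proof (ap_strict _ _ _ G2 _ _ Hb H2).
    pose proof (cnt_mono u w1 (fst x) (fst y) ltac:(lia)). lia.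
Qed.

Lemma lam_le_N S1 S2 w1 w2 u v (G1 : G S1 w1 u) (G2 : G S2 w2 v) x :
  apery2 (prodS S1 S2) (w1, w2) x -> lam u w1 v w2 x <= w1 + w2.
Proof.
  intros Ax. apply A_char in Ax. destruct Ax as (_&_&[Ha|Hb]); unfold lam.
  - pose proof (ap_cnt_lt _ _ _ G1 _ Ha). pose proof (cnt_le v w2 (snd x)). lia.
  - pose proof (ap_cnt_lt _ _ _ G2 _ Hb). pose proof (cnt_le u w1 (fst x)). lia.
Qed.

Definition Xm S1 S2 w1 w2 u v m : set2 :=
  fun x => apery2 (prodS S1 S2) (w1, w2) x /\ lam u w1 v w2 x <= m.

Lemma caseB T1 w1 u T2 w2 v (G1 : G T1 w1 u) (G2 : G T2 w2 v) a b m :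
  apery1 T1 w1 a -> T2 b -> ~ apery1 T2 w2 b ->
  cnt u w1 a + cnt v w2 b + 1 < m -> m <= w1 + w2 ->
  exists a' b', T1 a' /\ T2 b' /\ (apery1 T1 w1 a' \/ apery1 T2 w2 b') /\
    a < a' /\ b < b' /\ cnt u w1 a' + cnt v w2 b' + 1 <= m.
Proof.
  intros Ha Tb Hb Hl Hm.
  destruct (proj1 (G_ap _ _ _ G1 a) Ha) as [i [Hi E]]. subst a.
  rewrite (cnt_u _ _ _ G1 i Hi) in Hl.
  pose proof (nonap_pos _ _ _ G2 b Hb). pose proof (cnt_le v w2 b).
  destruct (Nat.eq_dec i w1).
  - subst i. destruct (witness _ _ _ G1 w1) as [e (Te&Ce&Le)]; [lia|].
    exists e, (v (S (cnt v w2 b))).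
    destruct (ap_in _ _ _ G2 (S (cnt v w2 b))) as [T' A']; [lia|].
    split; auto. split; auto. split; auto. split; auto.
    split; [apply (nonap_lt_next _ _ _ G2); auto; lia|].
    rewrite (cnt_u _ _ _ G2) by lia. lia.
  - destruct (nonap_next _ _ _ G2 b Tb Hb) as [b' (Tb'&Lb'&Cb')].
    destruct (ap_in _ _ _ G1 (S i)) as [T' A']; [lia|].
    exists (u (S i)), b'. repeat split; auto.
    apply (G_incr _ _ _ G1); lia.
    rewrite (cnt_u _ _ _ G1) by lia. lia.
Qed.

Lemma exists_above S1 S2 w1 w2 u v (G1 : G S1 w1 u) (G2 : G S2 w2 v) x m :
  apery2 (prodS S1 S2) (w1, w2) x -> lam u w1 v w2 x < m -> m <= w1 + w2 ->
  (exists y, apery2 (prodS S1 S2) (w1, w2) y /\ lam u w1 v w2 y <= m /\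
     fst x < fst y /\ snd x < snd y) \/
  (exists y1 y2, apery2 (prodS S1 S2) (w1, w2) y1 /\ lam u w1 v w2 y1 = m /\
     fst y1 = fst x /\ snd y1 > snd x /\
     apery2 (prodS S1 S2) (w1, w2) y2 /\ lam u w1 v w2 y2 = m /\
     snd y2 = snd x /\ fst y2 > fst x).
Proof.
  intros Ax Hl Hm. destruct x as [a b]. unfold lam in *; simpl in *.
  pose proof Ax as Ax'. apply A_char in Ax'. simpl in Ax'.
  destruct Ax' as (Ta&Tb&Hor).
  destruct (classic (apery1 S1 w1 a)) as [Pa|Pa];
  destruct (classic (apery1 S2 w2 b)) as [Pb|Pb].
  - destruct (proj1 (G_ap _ _ _ G1 a) Pa) as [i [Hi E]]. subst a.
    destruct (proj1 (G_ap _ _ _ G2 b) Pb) as [j [Hj E]]. subst b.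
    rewrite (cnt_u _ _ _ G1 i Hi), (cnt_u _ _ _ G2 j Hj) in Hl.
    destruct (le_lt_dec m (i + w2)); destruct (le_lt_dec m (j + w1)).
    + right.
      destruct (witness2 _ _ _ G2 j (m - i)) as [e2 (T2&C2&L2)]; try lia.
      destruct (witness2 _ _ _ G1 i (m - j)) as [e1 (T1&C1&L1)]; try lia.
      exists (u i, e2), (e1, v j). simpl.
      rewrite !A_char; simpl.
      rewrite (cnt_u _ _ _ G1 i Hi), (cnt_u _ _ _ G2 j Hj), C1, C2.
      repeat split; auto; try lia.
    + left. destruct (witness _ _ _ G1 i) as [e1 (T1&C1&L1)]; [lia|].
      destruct (ap_in _ _ _ G2 (S j)) as [T' A']; [lia|].
      exists (e1, v (S j)). rewrite A_char; simpl.
      rewrite C1, (cnt_u _ _ _ G2) by lia.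
      assert (v j < v (S j)) by (apply (G_incr _ _ _ G2); lia).
      repeat split; auto; lia.
    + left. destruct (witness _ _ _ G2 j) as [e2 (T2&C2&L2)]; [lia|].
      destruct (ap_in _ _ _ G1 (S i)) as [T' A']; [lia|].
      exists (u (S i), e2). rewrite A_char; simpl.
      rewrite C2, (cnt_u _ _ _ G1) by lia.
      assert (u i < u (S i)) by (apply (G_incr _ _ _ G1); lia).
      repeat split; auto; lia.
    + left. destruct (witness _ _ _ G2 j) as [e2 (T2&C2&L2)]; [lia|].
      destruct (ap_in _ _ _ G1 (S i)) as [T' A']; [lia|].
      exists (u (S i), e2). rewrite A_char; simpl.
      rewrite C2, (cnt_u _ _ _ G1) by lia.
      assert (u i < u (S i)) by (apply (G_incr _ _ _ G1); lia).
      repeat split; auto; lia.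
  - left. destruct (caseB _ _ _ _ _ _ G1 G2 a b m Pa Tb Pb Hl Hm)
      as [a' [b' (?&?&?&?&?&?)]].
    exists (a', b'). rewrite A_char; simpl. repeat split; auto.
  - left. destruct (caseB _ _ _ _ _ _ G2 G1 b a m Pb Ta Pa ltac:(lia) ltac:(lia))
      as [b' [a' (?&?&?&?&?&?)]].
    exists (a', b'). rewrite A_char; simpl. repeat split; auto; try tauto; lia.
  - exfalso; tauto.
Qed.

Lemma max_of_lam S1 S2 w1 w2 u v (G1 : G S1 w1 u) (G2 : G S2 w2 v) m x :
  apery2 (prodS S1 S2) (w1, w2) x -> lam u w1 v w2 x = m ->
  maxll (Xm S1 S2 w1 w2 u v m) x.
Proof.
  intros Ax Lx. split; [split; auto; lia|].
  intros b [Ab Lb] [E | [H1 H2]]; auto.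
  pose proof (lam_strict _ _ _ _ _ _ G1 G2 x b Ax H1 H2). lia.
Qed.

Lemma D_char S1 S2 w1 w2 u v (G1 : G S1 w1 u) (G2 : G S2 w2 v) m x :
  1 <= m <= w1 + w2 ->
  (Dstep (prodS S1 S2) (Xm S1 S2 w1 w2 u v m) x <->
   apery2 (prodS S1 S2) (w1, w2) x /\ lam u w1 v w2 x = m).
Proof.
  intros Hm. unfold Dstep, Bstep. split.
  - intros [[[Ax Lx] Hmax] Hnci]. split; auto.
    destruct (Nat.eq_dec (lam u w1 v w2 x) m); auto. exfalso.
    destruct (exists_above _ _ _ _ _ _ G1 G2 x m Ax ltac:(lia) ltac:(lia))
      as [[y (Ay&Ly&H1&H2)] | [y1 [y2 (A1&L1&E1&G1'&A2&L2&E2&G2')]]].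
    + assert (y = x) by (apply Hmax; [split; auto | right; auto]).
      subst; lia.
    + apply Hnci. split; [split; [split; auto | exact Hmax]|].
      exists y1, y2.
      split; [apply (max_of_lam _ _ _ _ _ _ G1 G2); auto|].
      split; [apply (max_of_lam _ _ _ _ _ _ G1 G2); auto|].
      apply A_char in A1. apply A_char in A2.
      unfold Delta1, Delta2, prodS. repeat split; tauto.
  - intros [Ax Lx]. split; [apply (max_of_lam _ _ _ _ _ _ G1 G2); auto|].
    intros [_ [b1 [b2 (B1&B2&D1&D2)]]].
    destruct B1 as [[_ Lb1] _]. destruct B2 as [[_ Lb2] _].
    destruct D1 as (_&E1&H1). destruct D2 as (_&E2&H2).
    pose proof Ax as Ax'. apply A_char in Ax'. destruct Ax' as (_&_&[Pa|Pb]);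
    unfold lam in *.
    + pose proof (ap_strict _ _ _ G1 _ _ Pa H2). rewrite E2 in Lb2. lia.
    + pose proof (ap_strict _ _ _ G2 _ _ Pb H1). rewrite E1 in Lb1. lia.
Qed.

Lemma Rem_eq S1 S2 w1 w2 u v (G1 : G S1 w1 u) (G2 : G S2 w2 v) n :
  n <= w1 + w2 ->
  Rem (prodS S1 S2) (apery2 (prodS S1 S2) (w1, w2)) n =
  Xm S1 S2 w1 w2 u v (w1 + w2 - n).
Proof.
  induction n; intros Hn.
  - cbn [Rem]. apply functional_extensionality; intro x.
    apply propositional_extensionality. unfold Xm. split; [|tauto].
    intro Ax; split; auto. pose proof (lam_le_N _ _ _ _ _ _ G1 G2 x Ax). lia.
  - cbn [Rem]. rewrite IHn by lia. apply functional_extensionality; intro x.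
    apply propositional_extensionality.
    rewrite (D_char _ _ _ _ _ _ G1 G2) by lia. unfold Xm.
    split.
    + intros [[Ax Lx] Hn']. split; auto.
      destruct (Nat.eq_dec (lam u w1 v w2 x) (w1 + w2 - n)); [tauto|lia].
    + intros [Ax Lx]. split; [split; auto; lia|]. intros [_ E]. lia.
Qed.

Lemma Dlev_char S1 S2 w1 w2 u v (G1 : G S1 w1 u) (G2 : G S2 w2 v) i x :
  1 <= i <= w1 + w2 ->
  (Dlev (prodS S1 S2) (apery2 (prodS S1 S2) (w1, w2)) i x <->
   apery2 (prodS S1 S2) (w1, w2) x /\ lam u w1 v w2 x = w1 + w2 + 1 - i).
Proof.
  intros Hi. unfold Dlev. rewrite (Rem_eq _ _ _ _ _ _ G1 G2) by lia.
  rewrite (D_char _ _ _ _ _ _ G1 G2) by lia.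
  replace (w1 + w2 - (i - 1)) with (w1 + w2 + 1 - i) by lia. tauto.
Qed.

Lemma level_nonempty S1 S2 w1 w2 u v (G1 : G S1 w1 u) (G2 : G S2 w2 v) m :
  1 <= m <= w1 + w2 ->
  exists x, apery2 (prodS S1 S2) (w1, w2) x /\ lam u w1 v w2 x = m.
Proof.
  intros Hm. destruct (le_lt_dec m w1).
  - exists (u m, 0). rewrite A_char; unfold lam; simpl.
    destruct (ap_in _ _ _ G1 m) as [T A]; [lia|].
    rewrite (cnt_u _ _ _ G1) by lia. rewrite cnt_zero0.
    pose proof G2 as ((h0&_)&_). repeat split; auto; lia.
  - destruct (witness _ _ _ G2 (m - w1)) as [e (Te&Ce&_)]; [lia|].
    pose proof G1 as (_&_&hw&_).
    exists (u w1, e). rewrite A_char; unfold lam; simpl.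
    destruct (ap_in _ _ _ G1 w1) as [T A]; [lia|].
    rewrite (cnt_u _ _ _ G1) by lia. rewrite Ce.
    repeat split; auto; lia.
Qed.

Lemma half T1 w1 u T2 w2 v (G1 : G T1 w1 u) (G2 : G T2 w2 v) a b k :
  2 <= k -> T2 b -> apery1 T1 w1 a -> cnt u w1 a + cnt v w2 b + 1 = k ->
  exists i j, 1 <= i <= w1 /\ 1 <= j <= w2 /\ i + j = k /\
  ((a = u i /\ T2 b /\ v j < b /\ le_next v w2 j b) \/
   (b = v j /\ T1 a /\ u i < a /\ le_next u w1 i a)).
Proof.
  intros Hk Tb Ha Hl.
  destruct (proj1 (G_ap _ _ _ G1 a) Ha) as [i [Hi E]]. subst a.
  rewrite (cnt_u _ _ _ G1 i Hi) in Hl. pose proof (cnt_le v w2 b).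
  destruct (Nat.eq_dec (cnt v w2 b) 0) as [e|ne].
  - pose proof (cnt0 _ _ _ G2 b e). subst b. pose proof (u1 _ _ _ G2).
    pose proof G2 as (_&_&hw2&_).
    exists (i - 1), 1. split; [lia|]. split; [lia|]. split; [lia|].
    right. split; [auto|]. split; [apply (ap_S _ _ _ Ha)|].
    apply (cnt_char _ _ _ G1); [lia|]. rewrite (cnt_u _ _ _ G1 i Hi). reflexivity.
  - exists i, (cnt v w2 b). split; [lia|]. split; [lia|]. split; [lia|].
    left. split; auto. split; auto.
    apply (cnt_char _ _ _ G2); [lia|]. reflexivity.
Qed.

Lemma half_back T1 w1 u T2 w2 v (G1 : G T1 w1 u) (G2 : G T2 w2 v) i j b :
  1 <= i <= w1 -> 1 <= j <= w2 -> v j < b -> le_next v w2 j b ->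
  T1 (u i) /\ apery1 T1 w1 (u i) /\ cnt u w1 (u i) + cnt v w2 b + 1 = i + j.
Proof.
  intros Hi Hj H1 H2. destruct (ap_in _ _ _ G1 i Hi) as [T A].
  split; auto. split; auto. rewrite (cnt_u _ _ _ G1 i Hi).
  rewrite (proj2 (cnt_char _ _ _ G2 j b Hj) (conj H1 H2)). lia.
Qed.

Lemma Aform_char S1 S2 w1 w2 u v (G1 : G S1 w1 u) (G2 : G S2 w2 v) k x :
  1 <= k ->
  (apery2 (prodS S1 S2) (w1, w2) x /\ lam u w1 v w2 x = k <->
   Aform S1 S2 w1 w2 u v k x).
Proof.
  intros Hk. unfold Aform. rewrite A_char. destruct x as [a b]; unfold lam; simpl.
  destruct (Nat.eqb_spec k 1).
  - subst k. split.
    + intros [_ E]. assert (cnt u w1 a = 0) as Ea by lia.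
      assert (cnt v w2 b = 0) as Eb by lia.
      apply (cnt0 _ _ _ G1) in Ea. apply (cnt0 _ _ _ G2) in Eb. subst; auto.
    + intros E. inversion E; subst. rewrite !cnt_zero0.
      pose proof G1 as ((h1&_)&_). pose proof G2 as ((h2&_)&_).
      repeat split; auto. left. apply (ap0 _ _ _ G1).
  - split.
    + intros [(Ta&Tb&[Pa|Pb]) Lx].
      * apply (half _ _ _ _ _ _ G1 G2 a b k); auto; lia.
      * destruct (half _ _ _ _ _ _ G2 G1 b a k) as [i [j (Hi&Hj&Hs&Hor)]];
          auto; try lia.
        exists j, i. split; auto. split; auto. split; [lia|]. tauto.
    + intros [i [j (Hi&Hj&Hs&[(Ea&Tb&L1&L2)|(Eb&Ta&L1&L2)])]].
      * subst a. destruct (half_back _ _ _ _ _ _ G1 G2 i j b Hi Hj L1 L2)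
          as (T&A&C). split; [repeat split; auto|]. lia.
      * subst b. destruct (half_back _ _ _ _ _ _ G2 G1 j i a Hj Hi L1 L2)
          as (T&A&C). split; [repeat split; auto|]. lia.
Qed.

Theorem corollary4p5 (S1 S2 : set1) (w1 w2 : nat) (u v : nat -> nat)
  (hS1 : numerical_semigroup S1) (hS2 : numerical_semigroup S2)
  (hw1S : S1 w1) (hw2S : S2 w2) (hw1 : 0 < w1) (hw2 : 0 < w2)
  (hu_incr : forall i j, 1 <= i -> i < j -> j <= w1 -> u i < u j)
  (hu_ap : forall x, apery1 S1 w1 x <-> exists i, 1 <= i <= w1 /\ x = u i)
  (hv_incr : forall i j, 1 <= i -> i < j -> j <= w2 -> v i < v j)
  (hv_ap : forall y, apery1 S2 w2 y <-> exists j, 1 <= j <= w2 /\ y = v j) :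
  are_levels (prodS S1 S2) (apery2 (prodS S1 S2) (w1, w2)) (w1 + w2)
    (Aform S1 S2 w1 w2 u v).
Proof.
  assert (G1 : G S1 w1 u) by (unfold G; tauto).
  assert (G2 : G S2 w2 v) by (unfold G; tauto).
  unfold are_levels. split; [|split].
  - intros i Hi.
    destruct (level_nonempty _ _ _ _ _ _ G1 G2 (w1 + w2 + 1 - i)) as [x Hx]; [lia|].
    exists x. apply (Dlev_char _ _ _ _ _ _ G1 G2); auto.
  - intros a. split.
    + intros Ha. pose proof (lam_le_N _ _ _ _ _ _ G1 G2 a Ha).
      assert (1 <= lam u w1 v w2 a) by (unfold lam; lia).
      exists (w1 + w2 + 1 - lam u w1 v w2 a). split; [lia|].
      apply (Dlev_char _ _ _ _ _ _ G1 G2); [lia|]. split; auto; lia.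
    + intros [i [Hi D]]. apply (Dlev_char _ _ _ _ _ _ G1 G2) in D; tauto.
  - intros k Hk a. rewrite (Dlev_char _ _ _ _ _ _ G1 G2) by lia.
    replace (w1 + w2 + 1 - (w1 + w2 + 1 - k)) with k by lia.
    apply (Aform_char _ _ _ _ _ _ G1 G2). lia.
Qed.
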